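(* Let $M$ be an extremally $\aleph_0$-saturated model of a complete affine theory $T$ and let $P:M^n\to\mathbb R$ be a definable predicate such that for all $\bar x,\bar y\in M^n$: (i) $0\le P(\bar x)$; (ii) $P(\bar x)-P(\bar y)\le d(\bar x,\bar y)$; (iii) for all reals $r,s\ge0$, $0\le\inf_{\bar x}\sup_{\bar y}\,[sP(\bar x)-rP(\bar y)-s\,d(\bar x,\bar y)]$ holds in $M$. Then $D=Z(P)=\{\bar a\in M^n:P(\bar a)=0\}$ is nonempty and $P(\bar x)=d(\bar x,D)$ for all $\bar x\in M^n$ (so $D$ is definable).
   Context: Affine continuous logic: $L$-structures are complete metric spaces $(M,d)$ with $d\le1$ and Lipschitz interpretations of function symbols and $[0,1]$-valued relation symbols; $M^n$ carries the metric $d(\bar x,\bar y)=\sum_id(x_i,y_i)$. Affine formulas are built from $1$ and atomic formulas (including $d$) using only $r\cdot\phi$ ($r\in\mathbb R$), $\phi+\psi$, $\inf_x$, $\sup_x$. $T$ is complete: for each sentence $\phi$ there is a unique $r$ with $T\models\phi=r$. For $A\subseteq M$, an $n$-type over $A$ is a maximal set of conditions with parameters from $A$ satisfiable with the theory of $(M,a)_{a\in A}$, identified with a positive normalized linear functional on formulas; $S_n(A)$ is the convex set of such types; a type is extreme if it is an extreme point of $S_n(A)$. $M$ is extremally $\aleph_0$-saturated if for every finite $A\subseteq M$ every extreme type in $S_n(A)$ is realized in $M$. A predicate $P:M^n\to\mathbb R$ is definable (without parameters) if it is a uniform limit of $\phi_k^M$ for affine formulas $\phi_k$. A closed $D\subseteq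 M^n$ is definable if $\bar x\mapsto d(\bar x,D)=\inf_{\bar a\in D}d(\bar x,\bar a)$ is definable. *)

(* Defs.v *)
From mathcomp Require Import all_boot all_order all_algebra.
From mathcomp Require Import all_classical all_reals.
From mathcomp Require Import Rstruct.

Set Implicit Arguments. Unset Strict Implicit. Unset Printing Implicit Defensive.
Import Order.TTheory GRing.Theory Num.Theory.
Local Open Scope ring_scope.
Local Open Scope classical_set_scope.

Notation R := Rdefinitions.R.

Record language := Language {
  fsym : Type; farity : fsym -> nat;
  rsym : Type; rarity : rsym -> nat }.

Definition tdist (M : Type) (d : M -> M -> R) (n : nat) (x y : 'I_n -> M) : R :=
  \sum_(i < n) d (x i) (y i).

Record structure (L : language) := Structure {
  carrier :> Type;
  dist : carrier -> carrier -> R;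
  dist_ge0 : forall x y, 0 <= dist x y;
  dist_le1 : forall x y, dist x y <= 1;
  dist_refl : forall x, dist x x = 0;
  dist_sep : forall x y, dist x y = 0 -> x = y;
  dist_sym : forall x y, dist x y = dist y x;
  dist_tri : forall x y z, dist x z <= dist x y + dist y z;
  dist_complete : forall u : nat -> carrier,
    (forall eps : R, 0 < eps -> exists N : nat, forall m k : nat,
        (N <= m)%N -> (N <= k)%N -> dist (u m) (u k) < eps) ->
    exists l : carrier, forall eps : R, 0 < eps -> exists N : nat,
        forall m : nat, (N <= m)%N -> dist (u m) l < eps;
  carrier_inhabited : inhabited carrier;
  fun_interp : forall f : fsym L, ('I_(farity f) -> carrier) -> carrier;
  fun_lip : forall f : fsym L, exists c : R, forall x y : 'I_(farity f) -> carrier,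
    dist (fun_interp x) (fun_interp y) <= c * tdist dist x y;
  rel_interp : forall r : rsym L, ('I_(rarity r) -> carrier) -> R;
  rel_range : forall (r : rsym L) (x : 'I_(rarity r) -> carrier), 0 <= @rel_interp r x <= 1;
  rel_lip : forall r : rsym L, exists c : R, forall x y : 'I_(rarity r) -> carrier,
    `|@rel_interp r x - @rel_interp r y| <= c * tdist dist x y }.

Inductive term (L : language) (P : Type) : Type :=
  | TVar : nat -> term L P
  | TPar : P -> term L P
  | TApp : forall f : fsym L, ('I_(farity f) -> term L P) -> term L P.

Inductive formula (L : language) (P : Type) : Type :=
  | FOne : formula L P
  | FRel : forall r : rsym L, ('I_(rarity r) -> term L P) -> formula L P
  | FDist : term L P -> term L P -> formula L P
  | FScale : R -> formula L P -> formula L P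
  | FAdd : formula L P -> formula L P -> formula L P
  | FInf : nat -> formula L P -> formula L P
  | FSup : nat -> formula L P -> formula L P.

Arguments TVar {L P}. Arguments TPar {L P}. Arguments TApp {L P}.
Arguments FOne {L P}. Arguments FRel {L P}. Arguments FDist {L P}.
Arguments FScale {L P}. Arguments FAdd {L P}. Arguments FInf {L P}.
Arguments FSup {L P}.

Fixpoint term_fv_ok (L : language) (P : Type) (ok : nat -> bool) (t : term L P)
  : Prop :=
  match t with
  | TVar i => ok i
  | TPar _ => True
  | TApp f args => forall j, term_fv_ok ok (args j)
  end.

Fixpoint fv_ok (L : language) (P : Type) (ok : nat -> bool) (phi : formula L P)
  : Prop :=
  match phi with
  | FOne => True
  | FRel r args => forall j, term_fv_ok ok (args j)
  | FDist t1 t2 => term_fv_ok ok t1 /\ term_fv_ok ok t2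
  | FScale _ psi => fv_ok ok psi
  | FAdd psi chi => fv_ok ok psi /\ fv_ok ok chi
  | FInf i psi => fv_ok (fun k => (k == i) || ok k) psi
  | FSup i psi => fv_ok (fun k => (k == i) || ok k) psi
  end.

Definition fv_lt (L : language) (P : Type) (n : nat) (phi : formula L P) : Prop :=
  fv_ok (fun k => (k < n)%N) phi.

Definition upd (M : Type) (e : nat -> M) (i : nat) (m : M) : nat -> M :=
  fun k => if k == i then m else e k.

Fixpoint teval (L : language) (M : structure L) (P : Type) (a : P -> M)
  (e : nat -> M) (t : term L P) : M :=
  match t with
  | TVar i => e i
  | TPar p => a p
  | TApp f args => fun_interp (fun j => teval a e (args j))
  end.

Fixpoint feval (L : language) (M : structure L) (P : Type) (a : P -> M)
  (e : nat -> M) (phi : formula L P) : R :=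
  match phi with
  | FOne => 1
  | FRel r args => rel_interp (fun j => teval a e (args j))
  | FDist t1 t2 => dist (teval a e t1) (teval a e t2)
  | FScale c psi => c * feval a e psi
  | FAdd psi chi => feval a e psi + feval a e chi
  | FInf i psi => inf [set feval a (upd e i m) psi | m in [set: carrier M]]
  | FSup i psi => sup [set feval a (upd e i m) psi | m in [set: carrier M]]
  end.

Definition extends (M : Type) (n : nat) (e : nat -> M) (x : 'I_n -> M) : Prop :=
  forall i : 'I_n, e i = x i.

(* ---------- Types over a finite parameter tuple a : 'I_k -> M ----------
   An n-type over A = {a_0,...,a_(k-1)} is a positive normalized linear
   functional on the affine formulas with free variables among x_0..x_(n-1)
   and parameters from A. *)
Definition is_type (L : language) (M : structure L) (k : nat) (a : 'I_k -> M)
  (n : nat) (p : formula L 'I_k -> R) : Prop :=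
  [/\ p FOne = 1,
      (forall c phi, fv_lt n phi -> p (FScale c phi) = c * p phi),
      (forall phi psi, fv_lt n phi -> fv_lt n psi ->
          p (FAdd phi psi) = p phi + p psi) &
      (forall phi, fv_lt n phi -> (forall e, 0 <= feval a e phi) -> 0 <= p phi)].

Definition is_extreme_type (L : language) (M : structure L) (k : nat)
  (a : 'I_k -> M) (n : nat) (p : formula L 'I_k -> R) : Prop :=
  is_type a n p /\
  forall (q1 q2 : formula L 'I_k -> R) (t : R), 0 < t < 1 ->
    is_type a n q1 -> is_type a n q2 ->
    (forall phi, fv_lt n phi -> p phi = t * q1 phi + (1 - t) * q2 phi) ->
    forall phi, fv_lt n phi -> q1 phi = q2 phi.

Definition realized (L : language) (M : structure L) (k : nat) (a : 'I_k -> M)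
  (n : nat) (p : formula L 'I_k -> R) : Prop :=
  exists b : 'I_n -> M, forall e : nat -> M, extends e b ->
    forall phi, fv_lt n phi -> p phi = feval a e phi.

Definition extremally_aleph0_saturated (L : language) (M : structure L) : Prop :=
  forall (k : nat) (a : 'I_k -> M) (n : nat) (p : formula L 'I_k -> R),
    is_extreme_type a n p -> realized a n p.

Definition definable_pred (L : language) (M : structure L) (n : nat)
  (Pr : ('I_n -> M) -> R) : Prop :=
  exists phi : nat -> formula L void,
    (forall j, fv_lt n (phi j)) /\
    forall eps : R, 0 < eps -> exists N : nat, forall j : nat, (N <= j)%N ->
      forall (x : 'I_n -> M) (e : nat -> M), extends e x ->
        `|Pr x - feval (fun v : void => match v with end) e (phi j)| <= eps.

Definition mdist (L : language) (M : structure L) (n : nat)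
  (x y : 'I_n -> M) : R := tdist (@dist L M) x y.

Definition dist_to_set (L : language) (M : structure L) (n : nat)
  (x : 'I_n -> M) (D : set ('I_n -> M)) : R :=
  inf [set mdist x y | y in D].

(* Main.v *)
Require Import Defs.
From mathcomp Require Import all_boot all_order all_algebra.
From mathcomp Require Import all_classical all_reals.
From mathcomp Require Import Rstruct.
From mathcomp Require Import ring lra.
Import Order.TTheory GRing.Theory Num.Theory.
Local Open Scope ring_scope.
Local Open Scope classical_set_scope.

Section Aux.
Context {L : language} {M : structure L} {n : nat}.
Implicit Types x y z : 'I_n -> M.

Lemma mdist_ge0 x y : 0 <= mdist x y.
Proof. by apply: sumr_ge0 => i _; apply: dist_ge0. Qed.

Lemma mdist_refl x : mdist x x = 0.
Proof. by rewrite /mdist /tdist big1 // => i _; rewrite dist_refl. Qed.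

Lemma mdist_sym x y : mdist x y = mdist y x.
Proof. by apply: eq_bigr => i _; rewrite dist_sym. Qed.

Lemma mdist_tri x y z : mdist x z <= mdist x y + mdist y z.
Proof.
rewrite /mdist /tdist -big_split /=; apply: ler_sum => i _; exact: dist_tri.
Qed.

Lemma mdist_const_bound x y (c : R) : (forall i, dist (x i) (y i) <= c) ->
  mdist x y <= n%:R * c.
Proof.
move=> H; rewrite /mdist /tdist (le_trans (ler_sum _ (fun i _ => H i))) //.
by rewrite sumr_const card_ord mulr_natl.
Qed.

Lemma mdist_le_n x y : mdist x y <= n%:R.
Proof.
by rewrite -[X in _ <= X]mulr1; apply: mdist_const_bound => i; apply: dist_le1.
Qed.

Lemma dist_le_mdist x y i : dist (x i) (y i) <= mdist x y.
Proof.
rewrite /mdist /tdist (bigD1 i) //= lerDl.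
by apply: sumr_ge0 => j _; apply: dist_ge0.
Qed.
End Aux.

Lemma geo (c d : R) : 0 < d -> exists k : nat, c / 2%:R ^+ k < d.
Proof.
move=> d0; exists (Num.bound (c / d)).
have h := upper_nthrootP (leqnn (Num.bound (c / d))).
have p : 0 < (2%:R : R) ^+ Num.bound (c / d) by apply: exprn_gt0.
rewrite ltr_pdivrMr //; rewrite ltr_pdivrMr // in h; by rewrite mulrC.
Qed.
Fixpoint seqf {A : Type} (f : nat -> A -> A) (a : A) (k : nat) : A :=
  match k with 0 => a | k'.+1 => f k' (seqf f a k') end.

Section Main.
Variables (L : language) (M : structure L) (n : nat)
  (Pr : ('I_n -> M) -> R).
Hypothesis H0 : forall x : 'I_n -> M, 0 <= Pr x.
Hypothesis Hlip : forall x y : 'I_n -> M, Pr x - Pr y <= mdist x y.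
Hypothesis H3 : forall r s : R, 0 <= r -> 0 <= s ->
     0 <= inf [set sup [set s * Pr x - r * Pr y - s * mdist x y
                       | y in [set: 'I_n -> M]]
              | x in [set: 'I_n -> M]].

Lemma step x (d : R) : 0 < d -> exists y, Pr y <= d /\ mdist x y <= Pr x + d.
Proof.
move=> d0.
have Px0 := H0 x.
pose r := (Pr x + d) / d.
have r0 : 0 < r by rewrite /r divr_gt0 //; lra.
have := H3 r 1 (ltW r0) ler01.
set S := fun z => [set 1 * Pr z - r * Pr y - 1 * mdist z y | y in [set: 'I_n -> M]].
have hsup : forall z, has_sup (S z).
  move=> z; split; first by exists (1 * Pr z - r * Pr z - 1 * mdist z z); exists z.
  exists (Pr z) => _ [y _ <-].
  have := H0 y; have := mdist_ge0 z y; have := ltW r0.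
  move=> a b c; rewrite !mul1r; nra.
have hinf : has_lbound [set sup (S z) | z in [set: 'I_n -> M]].
  exists (- r * (Pr x + n%:R)) => _ [z _ <-].
  apply: (@le_trans _ _ (1 * Pr z - r * Pr z - 1 * mdist z z)); last first.
    by apply: sup_upper_bound => //; exists z.
  have := Hlip z x; have := mdist_le_n z x; rewrite mdist_refl.
  have := H0 z; have := ltW r0; move=> a b c e; nra.
move=> /(le_trans)/(_ (ge_inf hinf (ex_intro2 _ _ x I erefl))) hx.
have [_ [y _ <-] ]:= sup_adherent d0 (hsup x).
move=> hy; exists y; split; last first.
  have := H0 y; have := ltW r0; move=> a b; nra.
have h1 : r * Pr y <= Pr x + d.
  have := mdist_ge0 x y; move=> a; nra.
have h2 : (Pr x + d) * Pr y <= (Pr x + d) * d.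
  have -> : (Pr x + d) * Pr y = d * (r * Pr y).
    by rewrite /r; field; rewrite gt_eqF.
  by rewrite [X in _ <= X]mulrC; apply: ler_wpM2l => //; exact: ltW.
by rewrite ler_pM2l in h2 => //; lra.
Qed.

Lemma approx x (e : R) : 0 < e ->
  exists l, Pr l = 0 /\ mdist x l <= Pr x + (1 + 3 * n%:R) * e.
Proof.
move=> e0.
pose rho k := e / (2%:R : R) ^+ k.
have rho_gt0 k : 0 < rho k by rewrite /rho divr_gt0 // exprn_gt0.
have rhoS k : rho k = 2 * rho k.+1.
  rewrite /rho exprS; field; apply: lt0r_neq0; exact: exprn_gt0.
have rho0 : rho 0%N = e by rewrite /rho expr0 divr1.
have [f hf] := choice (fun (p : nat * ('I_n -> M)) => @step p.2 (rho p.1.+1) (rho_gt0 p.1.+1)).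
pose xs := seqf (fun k z => f (k, z)) x.
have xsS k : xs k.+1 = f (k, xs k) by [].
have F1 k : Pr (xs k.+1) <= rho k.+1 by rewrite xsS; case: (hf (k, xs k)).
have F2 k : mdist (xs k) (xs k.+1) <= Pr (xs k) + rho k.+1
  by rewrite xsS; case: (hf (k, xs k)).
have C k i : mdist (xs k.+1) (xs (k.+1 + i)%N) <= 3 * rho k.+1 - 3 * rho (k.+1 + i)%N.
  elim: i => [|i IH]; first by rewrite addn0 mdist_refl; lra.
  rewrite addnS.
  have := mdist_tri (xs k.+1) (xs (k.+1 + i)%N) (xs (k.+1 + i)%N.+1).
  have := F2 (k.+1 + i)%N. have := F1 (k + i)%N. rewrite -addSn.
  have := rhoS (k.+1 + i)%N. lra.
have C' k m : (k.+1 <= m)%N -> mdist (xs k.+1) (xs m) <= 3 * rho k.+1.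
  move=> km; rewrite -(subnKC km).
  have := C k (m - k.+1)%N; have := rho_gt0 (k.+1 + (m - k.+1))%N; lra.
have cauchy (j : 'I_n) : forall eps : R, 0 < eps -> exists N : nat, forall m k : nat,
        (N <= m)%N -> (N <= k)%N -> dist (xs m j) (xs k j) < eps.
  move=> eps eps0; have [K hK] := geo (3 * e) eps eps0.
  exists K.+1 => m k hm hk.
  have := C' K m hm; have := C' K k hk.
  have := dist_le_mdist (xs K.+1) (xs m) j; have := dist_le_mdist (xs K.+1) (xs k) j.
  have := dist_tri (xs m j) (xs K.+1 j) (xs k j).
  rewrite (dist_sym (xs m j) (xs K.+1 j)).
  have := rhoS K. have e3 : 3 * e / 2%:R ^+ K = 3 * rho K by rewrite /rho mulrA.
  rewrite e3 in hK; lra.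
have [l hl] := choice (fun j => dist_complete (cauchy j)).
have B k j : dist (xs k.+1 j) (l j) <= 3 * rho k.+1.
  apply/ler_addgt0Pr => dl dl0.
  have [N hN] := hl j dl dl0.
  have := hN (k.+1 + N)%N (leq_addl _ _).
  have := C' k (k.+1 + N)%N (leq_addr _ _).
  have := dist_le_mdist (xs k.+1) (xs (k.+1 + N)%N) j.
  have := dist_tri (xs k.+1 j) (xs (k.+1 + N)%N j) (l j). lra.
have MB k : mdist (xs k.+1) l <= n%:R * (3 * rho k.+1) by apply: mdist_const_bound; exact: B.
have nn0 : 0 <= (n%:R : R) by [].
exists l; split.
  apply: le_anti; rewrite H0 andbT leNgt; apply/negP => hp.
  have [K hK] := geo ((1 + 3 * n%:R) * e) (Pr l) hp.
  have := Hlip l (xs K.+1). rewrite mdist_sym.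
  have := MB K. have := F1 K. have := rhoS K. have := rho_gt0 K.+1.
  have : n%:R * (3 * rho K.+1) <= n%:R * (3 * rho K).
    apply: ler_wpM2l => //; have := rhoS K; have := rho_gt0 K.+1; lra.
  have e3 : (1 + 3 * n%:R) * e / 2%:R ^+ K = (1 + 3 * n%:R) * rho K by rewrite /rho mulrA.
  rewrite e3 in hK; nra.
have := mdist_tri x (xs 1%N) l. have := F2 0%N. have := MB 0%N.
have : n%:R * (3 * rho 1%N) <= n%:R * (3 * e).
  apply: ler_wpM2l => //; have := rhoS 0%N; have := rho_gt0 1%N; lra.
have := rhoS 0%N; have := rho_gt0 1%N. rewrite rho0. nra.
Qed.
End Main.

Theorem mainTheorem15 (L : language) (M : structure L) (n : nat)
  (Pr : ('I_n -> M) -> R) :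
  extremally_aleph0_saturated M ->
  definable_pred Pr ->
  (forall x : 'I_n -> M, 0 <= Pr x) ->
  (forall x y : 'I_n -> M, Pr x - Pr y <= mdist x y) ->
  (forall r s : R, 0 <= r -> 0 <= s ->
     0 <= inf [set sup [set s * Pr x - r * Pr y - s * mdist x y
                       | y in [set: 'I_n -> M]]
              | x in [set: 'I_n -> M]]) ->
  (exists a : 'I_n -> M, Pr a = 0) /\
  (forall x : 'I_n -> M, Pr x = dist_to_set x [set a | Pr a = 0]).
Proof.
move=> _ _ H0 Hlip H3.
have [m0] := carrier_inhabited M.
have [a [Pa _]] := @approx _ _ _ _ H0 Hlip H3 (fun _ => m0) 1 ltr01.
split; first by exists a.
move=> x; rewrite /dist_to_set; apply: le_anti; apply/andP; split.
  apply: lb_le_inf; first by exists (mdist x a); exists a.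
  move=> _ [y Py <-]; have := Hlip x y; rewrite Py; lra.
apply/ler_addgt0Pr => d d0.
have c0 : 0 < 1 + 3 * (n%:R : R) by have : 0 <= (n%:R : R) by []; lra.
have [l [Pl hl]] := @approx _ _ _ _ H0 Hlip H3 x (d / (1 + 3 * n%:R)) (divr_gt0 d0 c0).
apply: (@le_trans _ _ (mdist x l)).
  by apply: ge_inf; [exists 0 => _ [y _ <-]; apply: mdist_ge0 | exists l].
by rewrite mulrC divfK ?gt_eqF in hl.
Qed.
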